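(* Fix $\tilde\mu:\mathcal X\times\{0,1\}\to[0,1]$, $\tilde e:\mathcal X\to[\bar e,1-\bar e]$ for some $\bar e>0$, and measurable $\tilde\eta_1,\dots,\tilde\eta_m:\mathcal X\to\mathbb R$, such that $\tilde\mu=\mu$ or $\tilde e=e$. Let $\kappa_\ell=1$ if $\tilde\eta_\ell=\eta_\ell$ and $\kappa_\ell=0$ otherwise. Then, writing $\Lambda=E_P[\phi^\rho_{g_0,\dots,g_m}(X,A,Y;\tilde e,\tilde\mu,\tilde\eta_1,\dots,\tilde\eta_m)]$: (i) if $\kappa_1=\dots=\kappa_m=1$, then $\Lambda=\mathrm{AHE}^\rho_{g_0,\dots,g_m}$; (ii) if $\rho_\ell=+1$ whenever $\kappa_\ell=0$, then $\Lambda\ge\mathrm{AHE}^\rho_{g_0,\dots,g_m}$; (iii) if $\rho_\ell=-1$ whenever $\kappa_\ell=0$, then $\Lambda\le\mathrm{AHE}^\rho_{g_0,\dots,g_m}$.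
   Context: Observed data $(X,A,Y)\sim P$ on $\mathcal X\times\{0,1\}\times\{0,1\}$; $e(x)=P(A=1\mid X=x)\in[\bar e,1-\bar e]$, $\mu(x,a)=E_P[Y\mid X=x,A=a]$. Fix $m\in\mathbb N$, $\rho\in\{-1,+1\}^m$, measurable $g_\ell=(g_\ell^{(0)},g_\ell^{(1)},g_\ell^{(2)}):\mathcal X\to[-1,1]^3$, $\ell=0,\dots,m$; $\eta_\ell(x)=g_\ell^{(0)}(x)\mu(x,0)+g_\ell^{(1)}(x)\mu(x,1)+g_\ell^{(2)}(x)$; $$\mathrm{AHE}^\rho_{g_0,\dots,g_m}=E_P\Big[g_0^{(0)}(X)\mu(X,0)+g_0^{(1)}(X)\mu(X,1)+g_0^{(2)}(X)+\sum_{\ell=1}^m\rho_\ell\min\{0,\eta_\ell(X)\}\Big].$$ For nuisances $\check e,\check\mu,\check\eta_\ell$, with $\check\zeta^{(a)}(X)=g_0^{(a)}(X)+\sum_{\ell=1}^m\rho_\ell\mathbb 1\{\check\eta_\ell(X)\le0\}g_\ell^{(a)}(X)$ ($a=0,1,2$), $$\phi^\rho_{g_0,\dots,g_m}(X,A,Y;\check e,\check\mu,\check\eta_1,\dots,\check\eta_m)=\check\zeta^{(2)}(X)+\check\zeta^{(0)}(X)\frac{(A-\check e(X))\check\mu(X,0)+(1-A)Y}{1-\check e(X)}+\check\zeta^{(1)}(X)\frac{(\check e(X)-A)\check\mu(X,1)+AY}{\check e(X)}.$$ *)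

(* Defs.v *)
From HB Require Import structures.
From mathcomp Require Import all_boot all_order all_algebra.
From mathcomp Require Import all_classical all_reals all_analysis.
Set Implicit Arguments. Unset Strict Implicit. Unset Printing Implicit Defensive.
Import Order.TTheory GRing.Theory Num.Theory.
Local Open Scope ring_scope.

(* The law P of (X,A,Y) on 𝒳 × {0,1} × {0,1} is disintegrated as
   P(dx, a, y) = PX(dx) * P(A=a | X=x) * P(Y=y | X=x, A=a),
   with e(x) = P(A=1|X=x) and mu(x,a) = E[Y | X=x, A=a] = P(Y=1|X=x,A=a).
   Booleans encode {0,1}: false = 0, true = 1. *)

Section Defs.
Context {d : measure_display} {T : measurableType d} {R : realType}.

Definition pA (e : T -> R) (x : T) (a : bool) : R := if a then e x else 1 - e x.
Definition pY (mu : T -> bool -> R) (x : T) (a y : bool) : R :=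
  if y then mu x a else 1 - mu x a.

Definition EP (PX : probability T R) (e : T -> R) (mu : T -> bool -> R)
  (f : T -> bool -> bool -> R) : \bar R :=
  (\int[PX]_x (\sum_(a <- [:: false; true]) \sum_(y <- [:: false; true])
      pA e x a * pY mu x a y * f x a y)%:E)%E.

Definition eta_l (g0 g1 g2 : nat -> T -> R) (mu : T -> bool -> R) (l : nat) (x : T) : R :=
  g0 l x * mu x false + g1 l x * mu x true + g2 l x.

Definition AHE (PX : probability T R) (e : T -> R) (mu : T -> bool -> R)
  (m : nat) (rho : nat -> R) (g0 g1 g2 : nat -> T -> R) : \bar R :=
  EP PX e mu (fun x _ _ =>
    g0 0%N x * mu x false + g1 0%N x * mu x true + g2 0%N x
    + \sum_(1 <= l < m.+1) rho l * Num.min 0 (eta_l g0 g1 g2 mu l x)).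

Definition zeta (m : nat) (rho : nat -> R) (ga : nat -> T -> R)
  (etac : nat -> T -> R) (x : T) : R :=
  ga 0%N x + \sum_(1 <= l < m.+1) rho l * ((etac l x <= 0)%R : bool)%:R * ga l x.

Definition phi (m : nat) (rho : nat -> R) (g0 g1 g2 : nat -> T -> R)
  (ec : T -> R) (muc : T -> bool -> R) (etac : nat -> T -> R)
  (x : T) (a y : bool) : R :=
  zeta m rho g2 etac x
  + zeta m rho g0 etac x * (((a%:R - ec x) * muc x false + (1 - a%:R) * y%:R)
                             / (1 - ec x))
  + zeta m rho g1 etac x * (((ec x - a%:R) * muc x true + a%:R * y%:R) / ec x).

End Defs.

(* Main.v *)
Require Import Defs.
From HB Require Import structures.
From mathcomp Require Import all_boot all_order all_algebra.
From mathcomp Require Import all_classical all_reals all_analysis.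
Import Order.TTheory GRing.Theory Num.Theory.
Local Open Scope ring_scope.


From mathcomp Require Import ring lra.

Lemma nn_mono d (T : measurableType d) (R : realType) (mu : {measure set T -> \bar R})
  (f g : T -> \bar R) : (forall x, (0 <= f x)%E) -> (forall x, (f x <= g x)%E) ->
  (\int[mu]_x f x <= \int[mu]_x g x)%E.
Proof.
move=> f0 fg.
have g0 : forall x, (0 <= g x)%E by move=> x; exact: le_trans (f0 x) (fg x).
rewrite (ge0_integralTE _ f0) (ge0_integralTE _ g0) /=.
apply: ge_ereal_sup => _ [h hf <-]; apply: ereal_sup_ubound; exists h => //.
by move=> x; apply: le_trans (hf x) (fg x).
Qed.

Lemma int_mono d (T : measurableType d) (R : realType) (mu : {measure set T -> \bar R})
  (f g : T -> R) : (forall x, f x <= g x) ->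
  (\int[mu]_x (f x)%:E <= \int[mu]_x (g x)%:E)%E.
Proof.
move=> fg.
rewrite integralE [X in (_ <= X)%E]integralE.
apply: leeB.
  apply: nn_mono => x; rewrite !funeposE.
    by rewrite le_max lexx orbT.
  by rewrite ge_max !le_max lee_fin fg /= lexx orbT.
apply: nn_mono => x; rewrite !funenegE.
  by rewrite le_max lexx orbT.
by rewrite ge_max !le_max lee_fin lerN2 fg /= lexx orbT.
Qed.

Lemma step1 (R : realType) (e t z0 z1 z2 : R) (u m : bool -> R) :
  t != 0 -> 1 - t != 0 -> (u = m \/ t = e) ->
  \sum_(a <- [:: false; true]) \sum_(y <- [:: false; true])
    (if a then e else 1 - e) * (if y then m a else 1 - m a) *
    (z2 + z0 * (((a%:R - t) * u false + (1 - a%:R) * y%:R) / (1 - t))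
        + z1 * (((t - a%:R) * u true + a%:R * y%:R) / t))
  = z2 + z0 * m false + z1 * m true.
Proof.
move=> t0 t1 H.
rewrite !big_cons !big_nil /=.
case: H => [->|te].
  by field; apply/andP.
by subst t; field; apply/andP.
Qed.

Lemma step0 (R : realType) (e c : R) (m : bool -> R) :
  \sum_(a <- [:: false; true]) \sum_(y <- [:: false; true])
    (if a then e else 1 - e) * (if y then m a else 1 - m a) * c
  = c.
Proof. rewrite !big_cons !big_nil /=. ring. Qed.

Lemma min_le_ind (R : realType) (c : bool) (y : R) : Num.min 0 y <= c%:R * y.
Proof.
case: c => /=; rewrite ?mul1r ?mul0r ge_min lexx ?orbT //.
Qed.

Lemma min_eq_ind (R : realType) (y : R) : ((y <= 0)%R : bool)%:R * y = Num.min 0 y.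
Proof.
case: (lerP y 0) => hy /=.
  by rewrite mul1r.
by rewrite mul0r.
Qed.

Theorem lemma5 (d : measure_display) (T : measurableType d) (R : realType)
  (PX : probability T R) (e : T -> R) (mu : T -> bool -> R) (ebar : R)
  (m : nat) (rho : nat -> R) (g0 g1 g2 : nat -> T -> R)
  (et : T -> R) (mut : T -> bool -> R) (etat : nat -> T -> R) (ebart : R) :
  (* standing assumptions on P *)
  0 < ebar ->
  (forall x, ebar <= e x <= 1 - ebar) ->
  measurable_fun setT e ->
  (forall x a, 0 <= mu x a <= 1) ->
  (forall a, measurable_fun setT (fun x => mu x a)) ->
  (forall l, (1 <= l <= m)%N -> rho l = 1 \/ rho l = -1) ->
  (forall l, (l <= m)%N ->
     [/\ measurable_fun setT (g0 l), measurable_fun setT (g1 l),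
         measurable_fun setT (g2 l) &
         forall x, [/\ -1 <= g0 l x <= 1, -1 <= g1 l x <= 1 & -1 <= g2 l x <= 1]]) ->
  (* nuisances *)
  (forall x a, 0 <= mut x a <= 1) ->
  (forall a, measurable_fun setT (fun x => mut x a)) ->
  0 < ebart ->
  (forall x, ebart <= et x <= 1 - ebart) ->
  measurable_fun setT et ->
  (forall l, (1 <= l <= m)%N -> measurable_fun setT (etat l)) ->
  (mut = mu \/ et = e) ->
  let Lambda := EP PX e mu (phi m rho g0 g1 g2 et mut etat) in
  let ahe := AHE PX e mu m rho g0 g1 g2 in
  [/\ ((forall l, (1 <= l <= m)%N -> etat l = eta_l g0 g1 g2 mu l) ->
        Lambda = ahe),
      ((forall l, (1 <= l <= m)%N -> etat l <> eta_l g0 g1 g2 mu l -> rho l = 1) ->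
        (ahe <= Lambda)%E) &
      ((forall l, (1 <= l <= m)%N -> etat l <> eta_l g0 g1 g2 mu l -> rho l = -1) ->
        (Lambda <= ahe)%E)].
Proof.
move=> ebar0 he me hmu mmu hrho hg hmut mmut ebart0 het met metat hcase Lambda ahe.
set G := fun x => g0 0%N x * mu x false + g1 0%N x * mu x true + g2 0%N x.
set S := fun (F : nat -> T -> R) x =>
  \sum_(1 <= l < m.+1) rho l * F l x.
have HL : forall x,
  \sum_(a <- [:: false; true]) \sum_(y <- [:: false; true])
      pA e x a * pY mu x a y * phi m rho g0 g1 g2 et mut etat x a y
  = G x + S (fun l x => (((etat l x <= 0)%R : bool)%:R * eta_l g0 g1 g2 mu l x)) x.
  move=> x.
  have t0 : et x != 0.
    by apply/lt0r_neq0; case/andP: (het x) => h _; exact: lt_le_trans h.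
  have t1 : 1 - et x != 0.
    apply/lt0r_neq0; case/andP: (het x) => _ h; lra.
  rewrite /pA /pY /phi.
  rewrite (@step1 R (e x) (et x) (zeta m rho g0 etat x) (zeta m rho g1 etat x)
     (zeta m rho g2 etat x) (mut x) (mu x)) //; last first.
    by case: hcase => [->|->]; [left|right].
  rewrite /zeta /G /S /eta_l !mulrDl !big_distrl /=.
  have -> : \sum_(1 <= l < m.+1) rho l * (((etat l x <= 0)%R : bool)%:R *
        (g0 l x * mu x false + g1 l x * mu x true + g2 l x)) =
     \sum_(1 <= l < m.+1) rho l * ((etat l x <= 0)%R : bool)%:R * g2 l x +
     \sum_(1 <= l < m.+1) rho l * ((etat l x <= 0)%R : bool)%:R * g0 l x * mu x false +
     \sum_(1 <= l < m.+1) rho l * ((etat l x <= 0)%R : bool)%:R * g1 l x * mu x true.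
    by rewrite -!big_split /=; apply: eq_bigr => i _; ring.
  ring.
have HA : forall x,
  \sum_(a <- [:: false; true]) \sum_(y <- [:: false; true])
      pA e x a * pY mu x a y *
      (g0 0%N x * mu x false + g1 0%N x * mu x true + g2 0%N x
    + \sum_(1 <= l < m.+1) rho l * Num.min 0 (eta_l g0 g1 g2 mu l x))
  = G x + S (fun l x => Num.min 0 (eta_l g0 g1 g2 mu l x)) x.
  by move=> x; rewrite /pA /pY step0.
have EL : Lambda = (\int[PX]_x (G x + S (fun l x =>
     (((etat l x <= 0)%R : bool)%:R * eta_l g0 g1 g2 mu l x)) x)%:E)%E.
  by rewrite /Lambda /EP; apply: eq_integral => x _; rewrite HL.
have EA : ahe = (\int[PX]_x (G x + S (fun l x =>
     Num.min 0 (eta_l g0 g1 g2 mu l x)) x)%:E)%E.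
  by rewrite /ahe /AHE /EP; apply: eq_integral => x _; rewrite HA.
rewrite EL EA; split.
- move=> hk; apply: eq_integral => x _; congr (_ + _)%:E.
  rewrite /S; apply: eq_big_nat => l hl; rewrite hk //.
  by rewrite min_eq_ind.
- move=> hk; apply: int_mono => x; rewrite lerD2l /S.
  apply: ler_sum_nat => l hl.
  have hl' : (1 <= l <= m)%N by rewrite ltnS in hl.
  case: (pselect (etat l = eta_l g0 g1 g2 mu l)) => [->|ne].
    by rewrite min_eq_ind.
  by rewrite (hk l hl' ne) !mul1r min_le_ind.
- move=> hk; apply: int_mono => x; rewrite lerD2l /S.
  apply: ler_sum_nat => l hl.
  have hl' : (1 <= l <= m)%N by rewrite ltnS in hl.
  case: (pselect (etat l = eta_l g0 g1 g2 mu l)) => [->|ne].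
    by rewrite min_eq_ind.
  by rewrite (hk l hl' ne) !mulN1r lerN2 min_le_ind.
Qed.
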